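(* Let $a,b\colon\mathbb N\to\mathbb Z\setminus\{0\}$ be injective sequences and let $c\colon\mathbb N\to[0,1/4]$ be any sequence. Then there exist a probability space $(X,\mathcal X,\mu)$, invertible measure preserving transformations $T,S\colon X\to X$, and $A\in\mathcal X$ such that $c(n)=\mu(T^{-a(n)}A\cap S^{-b(n)}A)$ for every $n\in\mathbb N$. *)

(* Defs.v *)
From HB Require Import structures.
From mathcomp Require Import all_boot all_order all_algebra.
From mathcomp Require Import all_classical all_reals all_analysis.
Set Implicit Arguments. Unset Strict Implicit. Unset Printing Implicit Defensive.
Import Order.TTheory GRing.Theory Num.Theory.
Local Open Scope classical_set_scope.
Local Open Scope ring_scope.

Definition zpow (X : Type) (T Tinv : X -> X) (z : int) : X -> X :=
  match z with
  | Posz n => iter n T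
  | Negz n => iter n.+1 Tinv
  end.

Definition invertible_mpt (d : measure_display) (X : measurableType d)
  (R : realType) (mu : set X -> \bar R) (T Tinv : X -> X) : Prop :=
  [/\ cancel T Tinv, cancel Tinv T,
      measurable_fun setT T, measurable_fun setT Tinv &
      forall B : set X, measurable B -> mu (T @^-1` B) = mu B].

(* Main.v *)
Require Import Defs.
From HB Require Import structures.
From mathcomp Require Import all_boot all_order all_algebra.
From mathcomp Require Import all_classical all_reals all_analysis.
Import Order.TTheory GRing.Theory Num.Theory.
Local Open Scope classical_set_scope.
Local Open Scope ring_scope.
Set Implicit Arguments. Unset Strict Implicit. Unset Printing Implicit Defensive.
Section NatPart. Local Open Scope nat_scope.
Definition okk k (s : seq (nat * bool)) (m : nat) : bool :=
  all (fun p => odd (m %/ 2 ^ (k - p.1.+1)) == p.2) s.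
Definition cnt k s : nat := \sum_(m < 2 ^ k) okk k s m.
Definition fcnt (I : eqType) (i : I) (s : seq (I * bool)) : nat :=
  (~~ ((i, true) \in s)) + (~~ ((i, false) \in s)).

Lemma sum_double (F : nat -> nat) N :
  \sum_(x < N.*2) F x = \sum_(m < N) (F m.*2 + F m.*2.+1).
Proof.
elim: N => [|N IH]; first by rewrite !big_ord0.
by rewrite doubleS !big_ord_recr /= IH addnA.
Qed.

Lemma okkS k s x : all (fun p => p.1 < k.+1) s ->
  okk k.+1 s x = okk k [seq p <- s | p.1 < k] (x %/ 2) &&
                 all (fun p => (p.1 == k) ==> (odd x == p.2)) s.
Proof.
elim: s => [|p s IH] //= /andP[pk sk].
rewrite IH // {IH}; case: ltnP => pk'.
  have -> : (p.1 == k) = false by rewrite ltn_eqF.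
  rewrite /= (_ : k.+1 - p.1.+1 = (k - p.1.+1).+1); last by rewrite subSS subnSK.
  rewrite expnS divnMA; case: (_ == _); by rewrite ?andbF.
have pe : p.1 = k by apply/eqP; rewrite eqn_leq pk'; rewrite ltnS in pk; rewrite pk.
rewrite pe eqxx subnn expn0 divn1 /=.
by case: (odd x == p.2); rewrite ?andbF //= andbC.
Qed.

Lemma fcnt_filter i k (s : seq (nat * bool)) : i < k -> fcnt i [seq p <- s | p.1 < k] = fcnt i s.
Proof.
move=> ik; rewrite /fcnt !mem_filter /= ik.
done.
Qed.

Lemma notin_all k b (s : seq (nat * bool)) :
  (~~ ((k, ~~ b) \in s)) = all (fun p => (p.1 == k) ==> (b == p.2)) s.
Proof.
elim: s => //= [[i c] s IH]; rewrite in_cons negb_or IH; congr (_ && _) => /=.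
rewrite xpair_eqE /= [k == i]eq_sym.
by case: (i == k); case: c; move: IH; case: b.
Qed.

Lemma fcnt_sum (k : nat) (s : seq (nat * bool)) :
  fcnt k s = all (fun p => (p.1 == k) ==> (odd 0 == p.2)) s +
             all (fun p => (p.1 == k) ==> (odd 1 == p.2)) s.
Proof.
have := notin_all k false s; have := notin_all k true s; rewrite /= => h1 h2.
by rewrite /fcnt h1 h2 addnC.
Qed.

Lemma cnt_prod k s : all (fun p => p.1 < k) s -> cnt k s = \prod_(i < k) fcnt (i : nat) s.
Proof.
elim: k s => [|k IH] s sk.
  case: s sk => [|p s] // _; by rewrite /cnt big_ord0 expn0 big_ord1.
rewrite /cnt expnS mul2n (sum_double (fun m => nat_of_bool (okk k.+1 s m))) big_ord_recr /=.
have -> : \prod_(i < k) fcnt (i : nat) s = \prod_(i < k) fcnt (i : nat) [seq p <- s | p.1 < k].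
  by apply: eq_bigr => i _; rewrite fcnt_filter.
rewrite -IH; last by apply/allP => p; rewrite mem_filter => /andP[].
rewrite /cnt big_distrl /=; apply: eq_bigr => m _.
rewrite !okkS // !divn2 /= uphalf_double doubleK odd_double /=.
rewrite fcnt_sum /=.
by case: okk; rewrite ?mul1n ?mul0n /=.
Qed.
End NatPart.
Section Digits.
Variable R : realType.

Lemma trunc_div (y : R) (N : nat) : 0 <= y -> (0 < N)%N ->
  Num.truncn (y / N%:R) = (Num.truncn y %/ N)%N.
Proof.
move=> y0 N0; set m := Num.truncn y.
have Nr : 0 < (N%:R : R) by rewrite ltr0n.
have /andP[my ym] := truncn_itv y0.
apply: truncn_def; apply/andP; split.
  rewrite ler_pdivlMr // -natrM (le_trans _ my) // ler_nat.
  by rewrite leq_divM.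
rewrite ltr_pdivrMr // (lt_le_trans ym) // -natrM ler_nat.
exact: ltn_ceil.
Qed.

Definition digit (i : nat) (r : R) : bool := odd (Num.truncn (r * 2 ^+ i.+1)).

Lemma digit_trunc r k i : 0 <= r -> (i < k)%N ->
  digit i r = odd (Num.truncn (r * 2 ^+ k) %/ 2 ^ (k - i.+1)).
Proof.
move=> r0 ik; rewrite /digit -trunc_div ?expn_gt0 //; last first.
  by rewrite mulr_ge0 // exprn_ge0.
congr (odd (Num.truncn _)); rewrite -mulrA; congr (_ * _).
rewrite natrX -{1}(subnK ik) exprD mulrC mulKf //.
Qed.


Lemma lam_itv (a b : R) : a < b ->
  lebesgue_measure ([set` `[a, b[] : set R) = (b - a)%:E.
Proof.
move=> ab; rewrite lebesgue_measure_itv /= lte_fin ab.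
done.
Qed.


Definition DS (s : seq (nat * bool)) : set R :=
  [set r | all (fun p => digit p.1 r == p.2) s].
Definition Ik k (m : nat) : set R := [set` `[m%:R / 2 ^+ k, m.+1%:R / 2 ^+ k[].

Lemma Ik_trunc k m r : Ik k m r -> 0 <= r /\ Num.truncn (r * 2 ^+ k) = m.
Proof.
rewrite /Ik /= in_itv /= => /andP[lo hi].
have k0 : 0 < (2 ^+ k : R) by rewrite exprn_gt0.
split; first by apply: le_trans lo; rewrite divr_ge0 ?ler0n ?exprn_ge0.
apply: truncn_def; apply/andP; split.
  by rewrite -ler_pdivrMr.
by rewrite -ltr_pdivlMr.
Qed.

Lemma DS_decomp k s : all (fun p => (p.1 < k)%N) s ->
  DS s `&` [set` `[0, 1[] =
  \big[setU/set0]_(m < 2 ^ k) (if okk k s m then Ik k m else set0).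
Proof.
move=> sk; have k0 : 0 < (2 ^+ k : R) by rewrite exprn_gt0.
rewrite -(bigcup_mkord _ (fun m => if okk k s m then Ik k m else set0)).
apply/seteqP; split => r.
- move=> [/= Hs]; rewrite in_itv /= => /andP[r0 r1].
  have rk0 : 0 <= r * 2 ^+ k by rewrite mulr_ge0 // ltW.
  set m := Num.truncn (r * 2 ^+ k).
  have okm : okk k s m.
    apply/allP => p ps; have := allP Hs p ps.
    by rewrite (digit_trunc r0 (allP sk p ps)).
  exists m.
    by rewrite /= truncn_lt_nat // natrX gtr_pMl.
  rewrite okm /Ik /= in_itv /=.
  have /andP[lo hi] := truncn_itv rk0.
  by rewrite ler_pdivrMr // ltr_pdivlMr // lo hi.
- move=> [m /= mk]; case: ifP => // okm /[dup] /Ik_trunc [r0 tm].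
  rewrite /Ik /= in_itv /= => /andP[lo hi].
  split.
    apply/allP => p ps; rewrite (digit_trunc r0 (allP sk p ps)) tm.
    exact: (allP okm p ps).
  rewrite in_itv /= r0 /=; apply: (lt_le_trans hi).
  by rewrite ler_pdivrMr // mul1r -natrX ler_nat.
Qed.

Lemma lam_DS k s : all (fun p => (p.1 < k)%N) s ->
  lebesgue_measure (DS s `&` [set` `[0, 1[]) = ((cnt k s)%:R / 2 ^+ k)%:E.
Proof.
move=> sk; have k0 : 0 < (2 ^+ k : R) by rewrite exprn_gt0.
rewrite (DS_decomp sk) measure_semi_additive_ord.
- rewrite /cnt natr_sum mulr_suml -sumEFin; apply: eq_bigr => m _.
  case: ifP => _; last by rewrite measure0 mul0r.
  rewrite /Ik; transitivity (((m.+1)%:R / 2 ^+ k - (m : nat)%:R / 2 ^+ k : R)%:E).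
    by apply: lam_itv; rewrite ltr_pM2r ?invr_gt0 // ltr_nat.
  by rewrite -mulrBl -natrB // subSnn.
- by move=> m; case: ifP => _ //; exact: measurable_itv.
- apply/trivIsetP => i j _ _ ij; apply/seteqP; split => // r [].
  case: ifP => _ // /Ik_trunc [_ ti]; case: ifP => _ // /Ik_trunc [_ tj].
  by move: ij; rewrite -val_eqE /= -ti -tj eqxx.
- apply: bigsetU_measurable => m _; case: ifP => _ //; exact: measurable_itv.
Qed.


Definition Gs (I : eqType) (s : seq (I * bool)) : R :=
  \prod_(i <- undup (map fst s)) ((fcnt i s)%:R / 2).

Lemma cnt_Gs k s : all (fun p => (p.1 < k)%N) s ->
  (cnt k s)%:R / 2 ^+ k = Gs s.
Proof.
move=> sk; rewrite cnt_prod // natr_prod.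
have -> : (\prod_(i < k) (fcnt (i : nat) s)%:R) / (2 ^+ k : R) =
          \prod_(0 <= i < k) ((fcnt i s)%:R / 2).
  by rewrite big_split /= -exprVn prodr_const_nat subn0 big_mkord.
rewrite (bigID (fun i => i \in map fst s)) /=.
rewrite [X in _ * X]big1 ?mulr1; last first.
  move=> i /negP ni; rewrite /fcnt.
  have -> : (i, true) \in s = false.
    by apply/negP => its; apply: ni; apply/mapP; exists (i, true).
  have -> : (i, false) \in s = false.
    by apply/negP => its; apply: ni; apply/mapP; exists (i, false).
  by rewrite /= divff.
rewrite /Gs -big_filter; apply: perm_big; apply: uniq_perm.
- by rewrite filter_uniq // iota_uniq.
- exact: undup_uniq.
move=> i; rewrite mem_filter mem_undup mem_iota /= add0n.
case/boolP: (i \in map fst s) => //= /mapP [p ps ->].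
by rewrite subn0 (allP sk p ps).
Qed.

Lemma Gs_map (I I' : eqType) (h : I -> I') (s : seq (I * bool)) : injective h ->
  Gs (map (fun p => (h p.1, p.2)) s) = Gs s.
Proof.
move=> hi; have hhi : injective (fun p : I * bool => (h p.1, p.2)).
  by move=> [a b] [c d] /= [/hi -> ->].
rewrite /Gs -map_comp (_ : fst \o _ = h \o fst) // map_comp undup_map_inj //.
rewrite big_map; apply: eq_bigr => i _; congr (_%:R / 2).
rewrite /fcnt.
by rewrite (mem_map hhi s (i, true)) (mem_map hhi s (i, false)).
Qed.

End Digits.

Set Implicit Arguments. Unset Strict Implicit. Unset Printing Implicit Defensive.

Section Space.
Variables (R : realType) (J : countType).

Definition cyl (s : seq (J * bool)) : set (J -> bool) :=
  [set x | all (fun p => x p.1 == p.2) s].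
Definition Gcyl : set (set (J -> bool)) := [set C | exists s, C = cyl s].
Definition XJ := g_sigma_algebraType Gcyl.

Lemma measurable_trunc_gt (c : R) (m : nat) : 0 < c ->
  measurable [set r : R | (m < Num.truncn (r * c))%N].
Proof.
move=> c0; have -> : [set r : R | (m < Num.truncn (r * c))%N] =
   [set` `[m.+1%:R / c, +oo[].
  apply/seteqP; split => r /=; rewrite in_itv /= andbT truncn_gt_nat;
  by rewrite ler_pdivrMr.
exact: measurable_itv.
Qed.

Lemma measurable_digit i b : measurable [set r : R | digit i r = b].
Proof.
have c0 : 0 < (2 ^+ i.+1 : R) by rewrite exprn_gt0.
set c := (2 ^+ i.+1 : R).
have -> : [set r : R | digit i r = b] =
  \bigcup_n (if odd n == b then
     ~` [set r : R | (n < Num.truncn (r * c))%N] `&`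
      (if n is n'.+1 then [set r : R | (n' < Num.truncn (r * c))%N] else setT)
   else set0).
  apply/seteqP; split => r /=.
    move=> <-; exists (Num.truncn (r * c)) => //; rewrite eqxx; split => /=.
      by rewrite ltnn.
    by case E: (Num.truncn (r * c)) => [|n] //=; rewrite E.
  move=> [n _]; case: ifP => // /eqP <- [/= /negP]; rewrite -leqNgt => h1.
  rewrite /digit -/c; case: n h1 => [|n] h1 /=.
    by move=> _; move: h1; rewrite leqn0 => /eqP ->.
  move=> h2; have -> : Num.truncn (r * c) = n.+1 by apply/eqP; rewrite eqn_leq h1 h2.
  by [].
apply: bigcupT_measurable => n; case: ifP => _ //.
apply: measurableI; first by apply: measurableC; exact: measurable_trunc_gt.
by case: n => [|n] //; exact: measurable_trunc_gt.
Qed.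


Definition dig (r : R) : XJ := fun j => digit (pickle j) r.
Definition pick_s (s : seq (J * bool)) : seq (nat * bool) :=
  map (fun p => (pickle p.1, p.2)) s.

Lemma dig_cyl s : dig @^-1` (cyl s) = DS (pick_s s).
Proof.
apply/seteqP; split => r /=; rewrite /DS /pick_s /= all_map => H;
  by apply: sub_all H => p.
Qed.

Lemma measurable_DS (s : seq (nat * bool)) : measurable (DS (R:=R) s).
Proof.
elim: s => [|[i b] s IH].
  by rewrite (_ : DS _ = setT) //; apply/seteqP; split.
rewrite (_ : DS _ = [set r : R | digit i r = b] `&` DS s).
  exact: measurableI (measurable_digit _ _) IH.
apply/seteqP; split => r /=; first by case/andP => /eqP.
by move=> [] ri Ds; rewrite /DS /= ri eqxx.
Qed.

Lemma measurable_dig : measurable_fun setT dig.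
Proof.
apply: (@measurability _ _ _ _ setT dig Gcyl) => //.
move=> _ [C [s ->] <-]; rewrite setTI dig_cyl; exact: measurable_DS.
Qed.

Let m01 := mrestr (@lebesgue_measure R) (measurable_itv `[(0:R), 1[).

Definition muJ : set XJ -> \bar R := fun A => m01 (dig @^-1` A).

Let muJ0 : muJ set0 = 0%E.
Proof. by rewrite /muJ preimage_set0 /m01 measure0. Qed.

Let muJ_ge0 A : (0 <= muJ A)%E.
Proof. exact: measure_ge0. Qed.

Let muJ_sigma_additive : semi_sigma_additive muJ.
Proof.
move=> F mF tF mUF; rewrite /muJ preimage_bigcup.
apply: measure_semi_sigma_additive.
- by move=> n; rewrite -[X in measurable X]setTI; exact: measurable_dig.
- apply/trivIsetP => /= i j _ _ ij; rewrite -preimage_setI.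
  by move/trivIsetP : tF => /(_ _ _ _ _ ij) ->//; rewrite preimage_set0.
- by rewrite -preimage_bigcup -[X in measurable X]setTI; exact: measurable_dig.
Qed.

HB.instance Definition _ := isMeasure.Build _ _ _ muJ
  muJ0 muJ_ge0 muJ_sigma_additive.

Lemma muJ_setT : muJ setT = 1%E.
Proof.
rewrite /muJ preimage_setT /m01 /mrestr setTI.
transitivity (((1 : R) - 0)%:E); first by apply: lam_itv.
by rewrite subr0.
Qed.

HB.instance Definition _ := Measure_isProbability.Build _ _ _ muJ muJ_setT.

Lemma ex_bound (s : seq (nat * bool)) : exists k, all (fun p => (p.1 < k)%N) s.
Proof.
elim: s => [|p s [k Hk]]; first by exists 0%N.
exists (maxn k p.1.+1) => /=; rewrite leq_max ltnSn orbT /=.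
by apply: sub_all Hk => q qk; rewrite leq_max qk.
Qed.

Lemma muJ_cyl s : muJ (cyl s) = (Gs R (pick_s s))%:E.
Proof.
have [k Hk] := ex_bound (pick_s s).
rewrite /muJ dig_cyl /m01 /mrestr.
rewrite -(cnt_Gs R Hk).
exact: lam_DS.
Qed.

End Space.

Section Transfo.
Variables (R : realType) (J : countType).
Variable tau : J -> J.

Definition Tmap (x : XJ J) : XJ J := fun j => x (tau j).

Lemma Tmap_cyl s : Tmap @^-1` cyl s = cyl (map (fun p => (tau p.1, p.2)) s).
Proof.
by apply/seteqP; split => x /=; rewrite /cyl /= all_map => H; apply: sub_all H.
Qed.

Lemma measurable_Tmap : measurable_fun setT Tmap.
Proof.
apply: (@measurability _ _ _ _ setT Tmap (@Gcyl J)) => //.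
move=> _ [C [s ->] <-]; rewrite setTI Tmap_cyl.
by apply: sub_sigma_algebra; eexists.
Qed.

Definition muT : set (XJ J) -> \bar R := fun A => muJ R (Tmap @^-1` A).

Let muT0 : muT set0 = 0%E.
Proof. by rewrite /muT preimage_set0 measure0. Qed.

Let muT_ge0 A : (0 <= muT A)%E.
Proof. exact: measure_ge0. Qed.

Let muT_sigma_additive : semi_sigma_additive muT.
Proof.
move=> F mF tF mUF; rewrite /muT preimage_bigcup.
apply: measure_semi_sigma_additive.
- by move=> n; rewrite -[X in measurable X]setTI; exact: measurable_Tmap.
- apply/trivIsetP => /= i j _ _ ij; rewrite -preimage_setI.
  by move/trivIsetP : tF => /(_ _ _ _ _ ij) ->//; rewrite preimage_set0.
- by rewrite -preimage_bigcup -[X in measurable X]setTI; exact: measurable_Tmap.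
Qed.

HB.instance Definition _ := isMeasure.Build _ _ _ muT
  muT0 muT_ge0 muT_sigma_additive.

Hypothesis tau_inj : injective tau.

Lemma muJ_Tmap A : measurable A -> muJ R (Tmap @^-1` A) = muJ R A.
Proof.
move=> mA.
apply: (@measure_unique _ R (XJ J) (@Gcyl J) (fun=> setT) erefl _ _ _ muT) => //.
- move=> _ _ [s ->] [t ->]; exists (s ++ t).
  by apply/seteqP; split => x; rewrite /cyl /= all_cat => /andP.
- by move=> _; exists [::]; apply/seteqP; split.
- by rewrite bigcup_const.
- move=> _ [s ->].
  change (muJ R (Tmap @^-1` cyl s) = muJ R (cyl s)).
  rewrite Tmap_cyl !muJ_cyl /pick_s -map_comp /=.
  rewrite (@Gs_map R _ _ (fun j => pickle (tau j))); last first.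
    by move=> i j /(pcan_inj pickleK) /tau_inj.
  rewrite (@Gs_map R _ _ pickle) //; exact: (pcan_inj pickleK).
- move=> _; change (muJ R (Tmap @^-1` setT) < +oo)%E.
  by rewrite preimage_setT muJ_setT ltry.
Qed.

End Transfo.

From mathcomp.algebra_tactics Require Import ring.
Import numFieldNormedType.Exports.

Set Implicit Arguments. Unset Strict Implicit. Unset Printing Implicit Defensive.

Section Bin.
Variable R : realType.

Lemma series_bound (t : R) (S : set nat) (w : nat -> R) :
  (forall N, `| t - \sum_(0 <= k < N | k \in S) w k | <= (2 ^+ N)^-1) ->
  (\sum_(0 <= k <oo | k \in S) (w k)%:E = t%:E)%E.
Proof.
move=> H.
set p := fun N => \sum_(0 <= k < N | k \in S) w k.
have pt : (p : R^nat) @ \oo --> (t : R).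
  apply/cvgrPdist_le => e e0.
  have h2 : `|(2 : R)^-1| < 1 by rewrite ger0_norm ?invr_ge0 // invf_lt1 // ltr1n.
  have := cvg_expr h2; move/cvgrPdist_le => /(_ e e0).
  apply: filterS => N; rewrite sub0r normrN exprVn => hN.
  by apply: le_trans (H N) _; rewrite (le_trans _ hN) // ler_norm.
have -> : (fun N => \sum_(0 <= k < N | k \in S) (w k)%:E)%E = EFin \o p.
  by apply/funext => N; rewrite /= sumEFin.
rewrite EFin_lim; last by apply/cvg_ex; exists t.
by rewrite (cvg_lim _ pt).
Qed.


Lemma psum_all N :
  \sum_(0 <= k < N | k \in [set: nat]) (2 ^+ k.+1 : R)^-1 = 1 - (2 ^+ N)^-1.
Proof.
elim: N => [|N IH]; first by rewrite big_geq // expr0 invr1 subrr.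
rewrite big_mkcond big_nat_recr //= -big_mkcond IH in_setT.
rewrite exprS invfM; field.
by rewrite expf_neq0.
Qed.

Lemma trunc_step (t : R) N : 0 <= t ->
  Num.truncn (t * 2 ^+ N.+1) = ((Num.truncn (t * 2 ^+ N)).*2 + digit N t)%N.
Proof.
move=> t0; rewrite /digit.
have -> : Num.truncn (t * 2 ^+ N) = (Num.truncn (t * 2 ^+ N.+1) %/ 2)%N.
  rewrite -trunc_div //; last by rewrite mulr_ge0 // exprn_ge0.
  by congr Num.truncn; rewrite exprS; field.
by rewrite -muln2 addnC -modn2 addnC -divn_eq.
Qed.

Lemma psum_digit (t : R) N : 0 <= t -> t < 1 ->
  \sum_(0 <= k < N | k \in [set k | digit k t]) (2 ^+ k.+1 : R)^-1 =
  (Num.truncn (t * 2 ^+ N))%:R / 2 ^+ N.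
Proof.
move=> t0 t1; elim: N => [|N IH].
  rewrite big_geq // expr0 mulr1 divr1.
  by rewrite (@truncn_def _ t 0) // t0 /= t1.
rewrite big_mkcond big_nat_recr //= -big_mkcond IH trunc_step //.
rewrite natrD -muln2 natrM.
have e : (2 ^+ N : R) != 0 by rewrite expf_neq0.
case: (boolP (digit N t)) => d.
  by rewrite mem_set //= exprS; field.
rewrite memNset /=; last exact/negP.
by rewrite exprS; field.
Qed.

Lemma binexp (t : R) : 0 <= t <= 1 ->
  exists S : set nat, (\sum_(0 <= k <oo | k \in S) ((2 ^+ k.+1 : R)^-1)%:E = t%:E)%E.
Proof.
case/andP => t0; rewrite le_eqVlt => /orP[/eqP ->|t1].
  exists setT; apply: series_bound => N.
  by rewrite psum_all opprB addrC subrK ger0_norm // invr_ge0 exprn_ge0.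
exists [set k | digit k t]; apply: series_bound => N.
rewrite psum_digit //.
have e : (0 : R) < 2 ^+ N by rewrite exprn_gt0.
have tN : 0 <= t * 2 ^+ N by rewrite mulr_ge0 // ltW.
have /andP[lo hi] := truncn_itv tN.
rewrite ger0_norm; last by rewrite subr_ge0 ler_pdivrMr.
rewrite lerBlDl.
have -> : (Num.truncn (t * 2 ^+ N))%:R / 2 ^+ N + (2 ^+ N)^-1 =
   ((Num.truncn (t * 2 ^+ N)).+1)%:R / (2 ^+ N : R).
  by rewrite -natr1; field; exact: lt0r_neq0.
by rewrite ler_pdivlMr // ltW.
Qed.

End Bin.

From mathcomp Require Import zify.

Set Implicit Arguments. Unset Strict Implicit. Unset Printing Implicit Defensive.

Definition JJ := (int * nat * bool)%type.

Definition sw (S : set nat) (q : nat) : nat :=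
  if ((q %% 3 == 0)%N || `[< S (q %/ 3)%N >]) then q
  else if (q %% 3 == 1)%N then q.+1 else q.-1.

Lemma swK S : involutive (sw S).
Proof.
move=> q; have [h|h] := boolP ((q %% 3 == 0)%N || `[< S (q %/ 3)%N >]).
  have e : sw S q = q by rewrite /sw h.
  by rewrite e e.
have e1 : sw S q = if (q %% 3 == 1)%N then q.+1 else q.-1 by rewrite /sw (negbTE h).
move: h => /norP [q0 qS]; rewrite e1; case: ifP => q1.
  rewrite /sw.
  have -> : ((q.+1) %% 3 == 0)%N = false by lia.
  have -> : ((q.+1) %/ 3 = q %/ 3)%N by lia.
  rewrite (negbTE qS) /=.
  have -> : ((q.+1) %% 3 == 1)%N = false by lia.
  by [].
rewrite /sw.
have -> : ((q.-1) %% 3 == 0)%N = false by lia.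
have -> : ((q.-1) %/ 3 = q %/ 3)%N by lia.
rewrite (negbTE qS) /=.
have -> : ((q.-1) %% 3 == 1)%N = true by lia.
lia.
Qed.

Lemma sw_inj S : injective (sw S).
Proof. exact: (inv_inj (swK S)). Qed.

Lemma sw3 S i : sw S (3 * i)%N = (3 * i)%N.
Proof. by rewrite /sw (_ : (3 * i %% 3 == 0)%N) //; lia. Qed.

Lemma sw_in S k : S k -> sw S (3 * k).+1 = (3 * k).+1 /\ sw S (3 * k).+2 = (3 * k).+2.
Proof.
move=> Sk; rewrite /sw.
have -> : ((3 * k).+1 %/ 3 = k)%N by lia.
have -> : ((3 * k).+2 %/ 3 = k)%N by lia.
by rewrite asboolT // !orbT.
Qed.

Lemma sw_out S k : ~ S k -> sw S (3 * k).+1 = (3 * k).+2.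
Proof.
move=> Sk; rewrite /sw.
have -> : ((3 * k).+1 %/ 3 = k)%N by lia.
rewrite asboolF // orbF.
have -> : ((3 * k).+1 %% 3 == 0)%N = false by lia.
have -> : ((3 * k).+1 %% 3 == 1)%N = true by lia.
by [].
Qed.

Definition tau (j : JJ) : JJ := if j.2 then (j.1.1 + 1, j.1.2, true) else j.
Definition taui (j : JJ) : JJ := if j.2 then (j.1.1 - 1, j.1.2, true) else j.

Lemma tauK : cancel tau taui.
Proof. by case=> [[m q] []] //=; rewrite /taui /= addrK. Qed.
Lemma tauiK : cancel taui tau.
Proof. by case=> [[m q] []] //=; rewrite /tau /= subrK. Qed.

Lemma zpow_gen (X : Type) (f g : X -> X) (h : int -> X) :
  (forall m, f (h m) = h (m + 1)) -> (forall m, g (h m) = h (m - 1)) ->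
  forall z, zpow f g z (h 0) = h z.
Proof.
move=> hf hg [] n /=.
  elim: n => [|n IH] //=; rewrite IH hf; congr h; lia.
elim: n => [|n IH] /=.
  by rewrite hg; congr h; lia.
rewrite IH hg; congr h; lia.
Qed.

Lemma zpow_tau z q : zpow tau taui z (0, q, true) = (z, q, true).
Proof.
by apply: (zpow_gen (h := fun m => (m, q, true))) => m.
Qed.

Section Pi.
Variables (a b : nat -> int) (S : nat -> set nat).
Hypotheses (a_inj : injective a) (b_inj : injective b).
Hypotheses (a_nz : forall n, a n != 0) (b_nz : forall n, b n != 0).

Definition nb (m : int) : nat := xget 0%N (fun n => m = - b n).

Definition iota_ (mp : int * nat) : JJ :=
  if mp.1 == 0 then (0, mp.2, true)
  else if `[< exists n, mp.1 = - b n >] then (- a (nb mp.1), sw (S (nb mp.1)) mp.2, true)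
  else (mp.1, mp.2, false).

Lemma nbP m : (exists n, m = - b n) -> m = - b (nb m).
Proof. by move=> h; rewrite /nb; exact: (xgetPex 0%N h). Qed.

Lemma iota_inj : injective iota_.
Proof.
move=> [m p] [m' p']; rewrite /iota_ /=.
case: (eqVneq m 0) => [->|m0]; case: (eqVneq m' 0) => [->|m'0] //=.
- by case=> ->.
- case: ifP => _ // [] /esym/eqP; by rewrite oppr_eq0 (negbTE (a_nz _)).
- case: ifP => _ // [] /eqP; by rewrite oppr_eq0 (negbTE (a_nz _)).
case: ifP => /asboolP h; case: ifP => /asboolP h' //.
  case=> /oppr_inj /a_inj e /(congr1 (sw (S (nb m')))); rewrite -e !swK => ->.
  by rewrite (nbP h) (nbP h') e.
by case=> -> ->.
Qed.

Definition ipre (j : JJ) : int * nat := xget (0, 0%N) (fun mp => j = iota_ mp).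
Definition inran (j : JJ) : bool := `[< exists mp, j = iota_ mp >].

Definition pi (j : JJ) : JJ :=
  if inran j then iota_ ((ipre j).1 + 1, (ipre j).2) else j.
Definition pii (j : JJ) : JJ :=
  if inran j then iota_ ((ipre j).1 - 1, (ipre j).2) else j.

Lemma ipreK mp : ipre (iota_ mp) = mp.
Proof.
apply: xget_unique; first by [].
by move=> y /iota_inj.
Qed.

Lemma inran_iota mp : inran (iota_ mp).
Proof. by apply/asboolP; exists mp. Qed.

Lemma pi_iota m p : pi (iota_ (m, p)) = iota_ (m + 1, p).
Proof. by rewrite /pi inran_iota ipreK. Qed.
Lemma pii_iota m p : pii (iota_ (m, p)) = iota_ (m - 1, p).
Proof. by rewrite /pii inran_iota ipreK. Qed.

Lemma piK : cancel pi pii.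
Proof.
move=> j; case: (boolP (inran j)) => [/asboolP [[m p] ->]|h].
  by rewrite pi_iota pii_iota addrK.
by rewrite /pi /pii (negbTE h) (negbTE h).
Qed.

Lemma piiK : cancel pii pi.
Proof.
move=> j; case: (boolP (inran j)) => [/asboolP [[m p] ->]|h].
  by rewrite pii_iota pi_iota subrK.
by rewrite /pi /pii (negbTE h) (negbTE h).
Qed.

Lemma zpow_pi n q : zpow pi pii (- b n) (0, q, true) = (- a n, sw (S n) q, true).
Proof.
have h0 : (0, q, true) = iota_ (0, q) by rewrite /iota_ /= ?eqxx.
rewrite h0 (zpow_gen (h := fun m => iota_ (m, q))) //; last first.
  - by move=> m; exact: pii_iota.
  - by move=> m; exact: pi_iota.
rewrite /iota_ /= oppr_eq0 (negbTE (b_nz n)).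
have ex : exists k, - b n = - b k by exists n.
rewrite asboolT //.
have -> : nb (- b n) = n by apply/b_inj/oppr_inj/esym/nbP.
by [].
Qed.

End Pi.

Section Gcomp.
Variable R : realType.

Lemma uniq_fst (I : eqType) (s : seq (I * bool)) i b c :
  uniq (map fst s) -> (i, b) \in s -> (i, c) \in s -> b = c.
Proof.
elim: s => [|[j d] s IH] //= /andP[js us]; rewrite !in_cons.
case/orP => [/eqP [ei eb]|ib]; case/orP => [/eqP [ei' ec]|ic].
- by rewrite eb ec.
- by move: js => /negP; case; apply/mapP; exists (i, c).
- by move: js => /negP; case; apply/mapP; exists (i, b).
- exact: IH.
Qed.

Lemma Gs_uniq (I : eqType) (s : seq (I * bool)) :
  uniq (map fst s) -> Gs R s = (2 ^+ size s)^-1.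
Proof.
move=> us; rewrite /Gs undup_id // big_map.
rewrite (eq_big_seq (fun=> 2^-1)); last first.
  move=> [i b] ib /=; rewrite /fcnt.
  case: b ib => ib.
    have -> : (i, false) \in s = false.
      by apply/negbTE/negP => ic; have := uniq_fst us ib ic.
    by rewrite ib /= mul1r.
  have -> : (i, true) \in s = false.
    by apply/negbTE/negP => ic; have := uniq_fst us ib ic.
  by rewrite ib /= mul1r.
rewrite big_const_seq count_predT -exprVn.
by elim: (size s) => //= n ->; rewrite exprS.
Qed.

End Gcomp.

Definition Ak (k : nat) : seq (nat * bool) :=
  [seq ((3 * i)%N, false) | i <- iota 0 k] ++
  [:: ((3 * k)%N, true); ((3 * k).+1, true); ((3 * k).+2, false)].

Lemma Ak_uniq k : uniq (map fst (Ak k)).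
Proof.
rewrite map_cat cat_uniq -map_comp; apply/and3P; split.
- rewrite map_inj_uniq ?iota_uniq // => i j /= /eqP; rewrite eqn_mul2l /=.
  by move/eqP.
- apply/hasPn => q /=; rewrite !in_cons in_nil orbF => /or3P[] /eqP ->;
  apply/mapP => -[i]; rewrite mem_iota add0n /= => ik; lia.
- rewrite /= !in_cons !in_nil; apply/andP; split; [|apply/andP; split] => //; lia.
Qed.

Lemma size_Ak k : size (Ak k) = (k + 3)%N.
Proof. by rewrite size_cat size_map size_iota. Qed.

Definition Pk k (u : nat -> bool) : bool := all (fun p => u p.1 == p.2) (Ak k).

Lemma PkE k u : Pk k u =
  [&& all (fun i => ~~ u (3 * i)%N) (iota 0 k), u (3 * k)%N, u (3 * k).+1 & ~~ u (3 * k).+2].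
Proof.
rewrite /Pk all_cat all_map /= andbT; congr (_ && _).
  by apply: eq_all => i /=; case: (u _).
by case: (u _); case: (u _); case: (u _).
Qed.

Lemma Pk_first k u : Pk k u -> (forall i, (i < k)%N -> u (3 * i)%N = false) /\ u (3 * k)%N.
Proof.
rewrite PkE => /and4P[/allP h1 h2 _ _]; split => // i ik.
by apply/negbTE/h1; rewrite mem_iota.
Qed.

Lemma Pk_unique k k' u v : Pk k u -> Pk k' v ->
  (forall i, u (3 * i)%N = v (3 * i)%N) -> k = k'.
Proof.
move=> /Pk_first [u1 u2] /Pk_first [v1 v2] uv.
case: (ltngtP k k') => // h.
  by move: (v1 _ h); rewrite -uv u2.
by move: (u1 _ h); rewrite uv v2.
Qed.

Lemma event_char (Sn : set nat) (u : nat -> bool) :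
  ((exists k, Pk k u) /\ (exists k, Pk k (u \o sw Sn))) <-> exists k, Sn k /\ Pk k u.
Proof.
split.
  move=> [[k Pu] [k' Pu']].
  have kk : k = k' by apply: (Pk_unique Pu Pu') => i /=; rewrite sw3.
  subst k'; exists k; split => //.
  apply/not_notP => Sk.
  move: Pu Pu'; rewrite !PkE /= (sw_out Sk) => /and4P[_ _ _ h] /and4P[_ _ h' _].
  by rewrite h' in h.
move=> [k [Sk Pu]]; split; exists k => //.
have [e1 e2] := sw_in Sk.
move: Pu; rewrite !PkE /= e1 e2 sw3 => /and4P[h1 -> -> ->]; rewrite !andbT /=.
by apply: sub_all h1 => i; rewrite sw3.
Qed.

Set Implicit Arguments. Unset Strict Implicit. Unset Printing Implicit Defensive.

Lemma iter_Tmap (J : countType) (f : J -> J) n (x : XJ J) j :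
  iter n (Tmap f) x j = x (iter n f j).
Proof.
elim: n j => [|n IH] j //=.
by rewrite /Tmap IH -iterSr iterS.
Qed.

Lemma zpow_Tmap (J : countType) (f g : J -> J) z (x : XJ J) j :
  zpow (Tmap f) (Tmap g) z x j = x (zpow f g z j).
Proof. by case: z => n; apply: iter_Tmap. Qed.

Definition lift (m : int) (s : seq (nat * bool)) : seq (JJ * bool) :=
  map (fun p => ((m, p.1, true), p.2)) s.

Lemma cyl_lift m s (x : XJ JJ) :
  cyl (lift m s) x = all (fun p => x (m, p.1, true) == p.2) s.
Proof. by rewrite /cyl /lift /= all_map. Qed.

Definition Aset : set (XJ JJ) := \bigcup_k cyl (lift 0 (Ak k)).

Lemma Aset_E (y : XJ JJ) : Aset y <-> exists k, Pk k (fun q => y (0, q, true)).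
Proof.
split; first by move=> [k _ h]; exists k; rewrite cyl_lift in h.
by move=> [k h]; exists k => //; rewrite cyl_lift.
Qed.

Lemma Pk_ext k u v : (forall q, u q = v q) -> Pk k u = Pk k v.
Proof. by move=> h; rewrite /Pk; apply: eq_all => p; rewrite h. Qed.

Lemma muJ_lift (R : realType) (m : int) (k : nat) :
  @muJ R JJ (cyl (lift m (Ak k))) = ((2 ^+ (k + 3))^-1 : R)%:E.
Proof.
rewrite muJ_cyl /pick_s /lift -map_comp.
rewrite (@Gs_map R _ _ (fun q => pickle ((m, q, true) : JJ)) (Ak k)); last first.
  by move=> i j /(pcan_inj pickleK) [].
by rewrite Gs_uniq ?Ak_uniq // size_Ak.
Qed.

Unset Implicit Arguments.

Theorem corollary4p2 (R : realType) (a b : nat -> int) (c : nat -> R)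
  (a_inj : injective a) (b_inj : injective b)
  (a_nz : forall n, a n != 0) (b_nz : forall n, b n != 0)
  (c_range : forall n, 0 <= c n <= 1 / 4) :
  exists (d : measure_display) (X : measurableType d) (mu : probability X R)
         (T Tinv S Sinv : X -> X) (A : set X),
    [/\ invertible_mpt mu T Tinv, invertible_mpt mu S Sinv, measurable A &
        forall n : nat,
          (c n)%:E = mu ((zpow T Tinv (- a n)) @^-1` A
                         `&` (zpow S Sinv (- b n)) @^-1` A)].
Proof.
have hS : forall n, exists S : set nat,
    (\sum_(0 <= k <oo | k \in S) ((2 ^+ k.+1 : R)^-1)%:E = (4 * c n)%:E)%E.
  move=> n; apply: binexp; have /andP[c0 c1] := c_range n.
  rewrite mulr_ge0 //= -(ler_pM2l (_ : (0 : R) < 4^-1)) ?invr_gt0 //.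
  by rewrite mulr1 mulrA mulVf // mul1r -div1r.
pose SS n := projT1 (cid (hS n)).
have HS : forall n, (\sum_(0 <= k <oo | k \in SS n) ((2 ^+ k.+1 : R)^-1)%:E
    = (4 * c n)%:E)%E by move=> n; exact: (projT2 (cid (hS n))).
exists _, (XJ JJ), (Probability.clone _ _ R (@muJ R JJ) _).
exists (Tmap tau), (Tmap taui), (Tmap (pi a b SS)), (Tmap (pii a b SS)), Aset.
split.
- split.
  + by move=> x; apply/funext => j; rewrite /Tmap tauiK.
  + by move=> x; apply/funext => j; rewrite /Tmap tauK.
  + exact: measurable_Tmap.
  + exact: measurable_Tmap.
  + by move=> B mB; apply: muJ_Tmap => //; exact: (can_inj tauK).
- split.
  + by move=> x; apply/funext => j; rewrite /Tmap (piiK b SS a_inj a_nz).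
  + by move=> x; apply/funext => j; rewrite /Tmap (piK b SS a_inj a_nz).
  + exact: measurable_Tmap.
  + exact: measurable_Tmap.
  + move=> B mB; apply: muJ_Tmap => //.
    exact: (can_inj (piK b SS a_inj a_nz)).
- by apply: bigcupT_measurable => k; apply: sub_sigma_algebra; eexists.
move=> n.
set E := _ `&` _.
set u := fun x : XJ JJ => fun q => x (- a n, q, true).
have eT x q : zpow (Tmap tau) (Tmap taui) (- a n) x (0, q, true) = u x q.
  by rewrite zpow_Tmap zpow_tau.
have eS x q : zpow (Tmap (pi a b SS)) (Tmap (pii a b SS)) (- b n) x (0, q, true) =
    (u x \o sw (SS n)) q.
  by rewrite zpow_Tmap (zpow_pi SS a_inj b_inj a_nz b_nz).
have -> : E = \bigcup_(k in SS n) cyl (lift (- a n) (Ak k)).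
  apply/seteqP; split => x.
    move=> [/Aset_E [k1 h1] /Aset_E [k2 h2]].
    have [k [Sk Pu]] : exists k, SS n k /\ Pk k (u x).
      apply/event_char; split.
        by exists k1; rewrite -(Pk_ext _ (eT x)).
      by exists k2; rewrite -(Pk_ext _ (eS x)).
    by exists k => //; rewrite cyl_lift.
  move=> [k Sk]; rewrite cyl_lift => Pu.
  have [[k1 h1] [k2 h2]] := (proj2 (event_char (SS n) (u x))) (ex_intro _ k (conj Sk Pu)).
  split; apply/Aset_E.
    by exists k1; rewrite (Pk_ext _ (eT x)).
  by exists k2; rewrite (Pk_ext _ (eS x)).
rewrite measure_bigcup //=; last first.
- move=> i j _ _ [x [h1 h2]].
  rewrite cyl_lift in h1; rewrite cyl_lift in h2.
  exact: (@Pk_unique i j (u x) (u x) h1 h2 (fun _ => erefl)).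
- by move=> k _; apply: sub_sigma_algebra; eexists.
rewrite (eq_eseriesr (g := fun k => ((4 : R)^-1)%:E * ((2 ^+ k.+1 : R)^-1)%:E)%E);
  last first.
  move=> k _; rewrite muJ_lift -EFinM; congr EFin.
  by rewrite addn3 !exprS !invfM; field.
rewrite nneseriesZl; last by move=> k _; rewrite lee_fin invr_ge0 exprn_ge0.
by rewrite HS -EFinM mulrA mulVf // mul1r.
Qed.
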